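(* For every integer $k>1$, the automorphism group $\mathrm{Aut}(\mathcal F_k)$ of the graph $\mathcal F_k$ is uncountable.
   Context: The vertex set $V$ consists of all reduced fractions $p/q$ with $p,q\in\mathbb Z$, $\gcd(p,q)=1$, together with $1/0$; here $p/q$ and $(-p)/(-q)$ denote the same vertex. For vertices define $d(p/q,a/b)=|pb-qa|$. The graph $\mathcal F_k$ has vertex set $V$, with an edge between $p/q$ and $a/b$ exactly when $d(p/q,a/b)=k$. $\mathrm{Aut}$ denotes the group of graph automorphisms. *)

(* Defs.v *)
From HB Require Import structures.
From mathcomp Require Import all_boot all_order all_algebra.
Set Implicit Arguments. Unset Strict Implicit. Unset Printing Implicit Defensive.
Import Order.TTheory GRing.Theory Num.Theory.

(* A vertex p/q is represented by its normalized coprime pair (p, q):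
   gcd(p,q) = 1 and either q > 0, or q = 0 and p = 1 (the vertex 1/0).
   This picks exactly one representative of each class {(p,q), (-p,-q)}. *)
Definition vertex_pred (x : int * int) : bool :=
  coprimez x.1 x.2 && ((0 < x.2)%R || ((x.2 == 0%R) && (x.1 == 1%R))).

Definition vertex : Type := {x : int * int | vertex_pred x}.

Definition fdist (x y : vertex) : nat :=
  absz ((val x).1 * (val y).2 - (val x).2 * (val y).1)%R.

Definition Fk_adj (k : nat) (x y : vertex) : Prop := fdist x y = k.

Definition is_Fk_aut (k : nat) (f : vertex -> vertex) : Prop :=
  bijective f /\ forall x y : vertex, Fk_adj k x y <-> Fk_adj k (f x) (f y).

(* Main.v *)
Require Import Defs.
From mathcomp Require Import all_boot all_order all_algebra zify ring lra.
From Stdlib Require Import ClassicalEpsilon.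
Set Implicit Arguments. Unset Strict Implicit.
Import Order.TTheory GRing.Theory Num.Theory.
Open Scope ring_scope.

Lemma cop_bez (m n : int) : coprimez m n -> exists u v : int, u * m + v * n = 1.
Proof. by move/coprimezP => [[u v] /= h]; exists u, v. Qed.

Lemma bez_cop (m n u v : int) : u * m + v * n = 1 -> coprimez m n.
Proof. by move=> h; apply/coprimezP; exists (u, v). Qed.

Definition inD (k n : nat) (x : vertex) : bool :=
  [&& 0 < (val x).2, (k%:Z %| (val x).1)%Z,
      0 < `|(val x).1 - k%:Z * n%:Z * (val x).2| &
      `|(val x).1 - k%:Z * n%:Z * (val x).2| < (val x).2].

Lemma u_pred (k n : nat) : vertex_pred (k%:Z * n%:Z, 1).
Proof. rewrite /vertex_pred /=; apply/andP; split; last by []. by apply: (@bez_cop _ _ 0 1); ring. Qed.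

Definition uv (k n : nat) : vertex := exist vertex_pred _ (u_pred k n).

Definition rho_val (k n : nat) (x : int * int) : int * int :=
  if x.2 == 0 then x else (2 * k%:Z * n%:Z * x.2 - x.1, x.2).

Lemma rho_pred k n x : vertex_pred x -> vertex_pred (rho_val k n x).
Proof.
case: x => p q; rewrite /rho_val /=; case: eqP => // h0.
rewrite /vertex_pred /= => /andP [/cop_bez [u [v huv]] h2].
apply/andP; split; last by move/eqP/negbTE: h0 => h0; rewrite h0 /= orbF in h2 *.
apply: (@bez_cop _ _ (- u) (v + 2 * k%:Z * n%:Z * u)).
rewrite -huv; ring.
Qed.

Definition rho k n (x : vertex) : vertex := exist vertex_pred _ (rho_pred k n (valP x)).

Lemma fdist_sym x y : fdist x y = fdist y x.
Proof. rewrite /fdist -abszN; congr absz; ring. Qed.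

Lemma rho_fdist k n x y : fdist (rho k n x) (rho k n y) = fdist x y.
Proof.
case: x => [[p q] hx]; case: y => [[a b] hy]; rewrite /fdist /rho /rho_val /=.
case: eqP => [->|_]; case: eqP => [->|_] //=.
- congr absz; ring.
- congr absz; ring.
- rewrite -abszN; congr absz; ring.
Qed.

Lemma rho_invol k n x : rho k n (rho k n x) = x.
Proof.
apply: val_inj; case: x => [[p q] hx]; rewrite /rho /rho_val /=.
case: (q =P 0) => [->|h] //=; rewrite /=; case: eqP => // _; congr pair; ring.
Qed.

Lemma rho_u k n : rho k n (uv k n) = uv k n.
Proof. apply: val_inj; rewrite /rho /rho_val /=; congr pair; ring. Qed.

Lemma inD_uniq k n m x : (1 < k)%N -> inD k n x -> inD k m x -> n = m.
Proof.
case: x => [[p q] hx] hk; rewrite /inD /= => /and4P [hq _ h1 h2] /and4P [_ _ h3 h4].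
have e : k%:Z * (n%:Z - m%:Z) * q = (p - k%:Z * m%:Z * q) - (p - k%:Z * n%:Z * q) by ring.
have h5 : `|k%:Z * (n%:Z - m%:Z) * q| < 2 * q by rewrite e; lia.
move: h5; rewrite normrM (gtr0_norm hq) => h5.
have h6 : `|k%:Z * (n%:Z - m%:Z)| < 2 by nia.
move: h6; rewrite normrM; set d := (n%:Z - m%:Z).
have : d = 0 \/ 1 <= `|d| by lia.
case=> [hd|hd] h6; first by rewrite /d in hd; lia.
nia.
Qed.

Lemma u_notD k n m : inD k m (uv k n) = false.
Proof. apply/negbTE; rewrite /inD /=; apply/negP => /and3P [_ h1 h2]; lia. Qed.

Lemma rho_inD k n x : inD k n x -> inD k n (rho k n x).
Proof.
case: x => [[p q] hx]; rewrite /inD /rho /rho_val /= => /and4P [hq /dvdzP [c hc] h1 h2].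
have -> : (q == 0) = false by lia.
rewrite /=; apply/and4P; split => //.
- apply/dvdzP; exists (2 * n%:Z * q - c); rewrite hc; ring.
- lia.
- lia.
Qed.

Lemma ineq_core (k P q A b : int) : 1 < k -> 0 < k * `|P| < q -> `|P * b - q * A| = 1 -> 0 < b -> b + 1 <= k * `|A| -> A != 0 -> False.
Proof. move=> hk h1 h2 hb h3 h4. nia. Qed.

Lemma kY1 (K Y : int) : 1 < K -> K * Y = 1 -> False.
Proof. move=> h1 h2. have : (Y <= 0) \/ (1 <= Y) by lia. case=> h; nia. Qed.

Lemma bY1 (b Y : int) : 0 < b -> b * Y = 1 -> b = 1.
Proof. move=> h1 h2. have : (Y <= 0) \/ (1 <= Y) by lia. case=> h; nia. Qed.

Lemma closure k n x y : (1 < k)%N -> inD k n x -> fdist x y = k -> inD k n y \/ y = uv k n.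
Proof.
case: x => [[p q] hx]; case: y => [[a b] hy] hk.
rewrite /inD /fdist /= => /and4P [hq /dvdzP [p' hp] h1 h2] hd.
have /andP [/cop_bez [u [v huv]] _] : vertex_pred (p, q) := hx.
have /andP [/cop_bez [s [t hst]] hb] : vertex_pred (a, b) := hy.
rewrite /= in huv hst hb.
subst p.
have hK : `|p' * k%:Z * b - q * a| = k%:Z by lia.
have hb0 : 0 < b.
  move: hb => /orP [//| /andP [/eqP hb0 /eqP ha1]]; subst; exfalso.
  have hq' : q = k%:Z by lia.
  subst q; have : k%:Z * (u * p' + v) = 1 by rewrite -huv; ring.
  apply: kY1; lia.
have [a' ha] : exists a', a = a' * k%:Z.
  have : p' * k%:Z * b - q * a = k%:Z \/ p' * k%:Z * b - q * a = - k%:Z by lia.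
  case=> e.
  - exists (u * p' * a + v * (p' * b - 1)).
    transitivity (a * (u * (p' * k%:Z) + v * q)); first by rewrite huv mulr1.
    have e2 : q * a = p' * k%:Z * b - k%:Z by lia.
    rewrite mulrDr (mulrC a (v * q)) -(mulrA v q a) e2; ring.
  - exists (u * p' * a + v * (p' * b + 1)).
    transitivity (a * (u * (p' * k%:Z) + v * q)); first by rewrite huv mulr1.
    have e2 : q * a = p' * k%:Z * b + k%:Z by lia.
    rewrite mulrDr (mulrC a (v * q)) -(mulrA v q a) e2; ring.
subst a.
have e3 : p' * k%:Z * b - q * (a' * k%:Z) = k%:Z * (p' * b - q * a') by ring.
rewrite e3 normrM in hK.
have hK1 : `|p' * b - q * a'| = 1 by nia.
have e4 : a' * k%:Z - k%:Z * n%:Z * b = k%:Z * (a' - n%:Z * b) by ring.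
have e5 : p' * k%:Z - k%:Z * n%:Z * q = k%:Z * (p' - n%:Z * q) by ring.
rewrite e5 normrM in h1 h2.
case: (a' - n%:Z * b =P 0) => hA.
- right.
  have e6 : b * (s * n%:Z * k%:Z + t) = 1.
    rewrite -hst; have -> : a' = n%:Z * b by lia.
    ring.
  have hb1 : b = 1 by apply: bY1 e6.
  apply: val_inj => /=; congr pair; lia.
- left; apply/and4P; split => //.
  + by apply/dvdzP; exists a'.
  + rewrite e4 normrM; nia.
  + rewrite e4 normrM.
    have : k%:Z * `|a' - n%:Z * b| = b \/ b + 1 <= k%:Z * `|a' - n%:Z * b| \/ k%:Z * `|a' - n%:Z * b| < b by lia.
    case=> [heq|[hge|//]]; exfalso.
    * have : (0 <= a' - n%:Z * b) \/ (a' - n%:Z * b < 0) by lia.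
      case=> hs.
      -- rewrite (ger0_norm hs) in heq.
         have e7 : k%:Z * (s * a' + t * (a' - n%:Z * b)) = 1.
           transitivity (s * (a' * k%:Z) + t * (k%:Z * (a' - n%:Z * b))); first ring.
           by rewrite heq.
         apply: kY1 e7; lia.
      -- rewrite (ltr0_norm hs) in heq.
         have e7 : k%:Z * (s * a' - t * (a' - n%:Z * b)) = 1.
           transitivity (s * (a' * k%:Z) + t * (k%:Z * - (a' - n%:Z * b))); first ring.
           by rewrite heq.
         apply: kY1 e7; lia.
    * apply: (@ineq_core k%:Z (p' - n%:Z * q) q (a' - n%:Z * b) b) => //.
      -- lia.
      -- by rewrite -hK1; congr Num.norm; ring.
      -- by apply/eqP.
Qed.

Definition Nof (k : nat) (x : vertex) : nat :=
  match excluded_middle_informative (exists n, inD k n x) with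
  | left H => proj1_sig (constructive_indefinite_description _ H)
  | right _ => 0%N end.

Lemma Nof_spec k n x : (1 < k)%N -> inD k n x -> Nof k x = n.
Proof.
move=> hk hx; rewrite /Nof; case: excluded_middle_informative => [H|H].
- case: constructive_indefinite_description => m hm /=; exact: inD_uniq hk hm hx.
- by exfalso; apply: H; exists n.
Qed.

Definition Fm k (c : nat -> bool) (x : vertex) : vertex :=
  if inD k (Nof k x) x && c (Nof k x) then rho k (Nof k x) x else x.

Lemma Fcases k (c : nat -> bool) x : (1 < k)%N ->
  (exists n, [/\ inD k n x, c n & Fm k c x = rho k n x]) \/
  (Fm k c x = x /\ forall n, inD k n x -> c n = false).
Proof.
move=> hk; rewrite /Fm; case E: (inD k (Nof k x) x && c (Nof k x)).
- by left; exists (Nof k x); case/andP: E.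
- right; split => // n hn; move: E; rewrite (Nof_spec hk hn) hn /=.
  by move=> ->.
Qed.

Lemma swap k n x y : (1 < k)%N -> inD k n x -> ~~ inD k n y ->
  (fdist (rho k n x) y = k <-> fdist x y = k).
Proof.
move=> hk hx hy; case: (y =P uv k n) => [->|hne].
  by rewrite -{1}(rho_u k n) rho_fdist.
split => h; exfalso.
- have [|] := closure hk (rho_inD hx) h; [by rewrite (negbTE hy) | done].
- have [|] := closure hk hx h; [by rewrite (negbTE hy) | done].
Qed.

Lemma swap' k n x y : (1 < k)%N -> inD k n x -> ~~ inD k n y ->
  (fdist y (rho k n x) = k <-> fdist y x = k).
Proof. by move=> *; rewrite fdist_sym (fdist_sym y x); apply: swap. Qed.

Lemma notD k n m x : (1 < k)%N -> inD k m x -> n <> m -> ~~ inD k n x.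
Proof. by move=> hk hm hnm; apply/negP => hn; apply: hnm; apply: inD_uniq hk hn hm. Qed.

Lemma fdist_F k (c : nat -> bool) x y : (1 < k)%N ->
  (fdist (Fm k c x) (Fm k c y) = k <-> fdist x y = k).
Proof.
move=> hk.
case: (Fcases c x hk) => [[n [hx hcn ->]]|[-> Hx]];
case: (Fcases c y hk) => [[m [hy hcm ->]]|[-> Hy]].
- case: (eqVneq n m) => [<-|hnm]; first by rewrite rho_fdist.
  have hnm' : n <> m by apply/eqP.
  rewrite (swap hk hx (notD hk (rho_inD hy) hnm')).
  exact: (swap' hk hy (notD hk hx (nesym hnm'))).
- have hyn : ~~ inD k n y by apply/negP => hyn; rewrite (Hy n hyn) in hcn.
  exact: (swap hk hx hyn).
- have hxm : ~~ inD k m x by apply/negP => hxm; rewrite (Hx m hxm) in hcm.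
  exact: (swap' hk hy hxm).
- by [].
Qed.

Lemma F_invol k (c : nat -> bool) x : (1 < k)%N -> Fm k c (Fm k c x) = x.
Proof.
move=> hk; case: (Fcases c x hk) => [[n [hx hcn ->]]|[e _]]; last by rewrite !e.
case: (Fcases c (rho k n x) hk) => [[m [hm _ ->]]|[_ H]].
- by rewrite -(inD_uniq hk (rho_inD hx) hm) rho_invol.
- by rewrite H in hcn; last exact: rho_inD.
Qed.

Lemma z_pred (k n : nat) : vertex_pred (k%:Z * n%:Z * (k%:Z + 1) + k%:Z, k%:Z + 1).
Proof.
apply/andP; split; last by apply/orP; left; rewrite /=; lia.
rewrite /=; apply: (@bez_cop _ _ (-1) (k%:Z * n%:Z + 1)); ring.
Qed.

Definition zv k n : vertex := exist vertex_pred _ (z_pred k n).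

Lemma z_in k n : (1 < k)%N -> inD k n (zv k n).
Proof.
move=> hk; rewrite /inD /=.
have e : k%:Z * n%:Z * (k%:Z + 1) + k%:Z - k%:Z * n%:Z * (k%:Z + 1) = k%:Z by ring.
rewrite e; apply/and4P; split; try lia.
apply/dvdzP; exists (n%:Z * (k%:Z + 1) + 1); ring.
Qed.

Lemma rho_z k n : (1 < k)%N -> rho k n (zv k n) <> zv k n.
Proof.
move=> hk /(congr1 (fun v : vertex => (val v).1)); rewrite /rho /rho_val /=.
have -> : (k%:Z + 1 == 0) = false by lia.
rewrite /=; nia.
Qed.

Close Scope ring_scope.

Theorem corollary1p2 (k : nat) (hk : 1 < k) :
  ~ (exists g : nat -> (vertex -> vertex),
       forall f : vertex -> vertex, is_Fk_aut k f -> exists n : nat, g n =1 f).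
Proof.
move=> [g hg].
pose c := fun n => g n (zv k n) == zv k n.
have hF : is_Fk_aut k (Fm k c).
  split; first by exists (Fm k c) => x; apply: F_invol.
  by move=> x y; rewrite /Fk_adj; apply: iff_sym; apply: fdist_F.
have [n hn] := hg _ hF.
move: (hn (zv k n)); rewrite /Fm (Nof_spec hk (z_in n hk)) (z_in n hk) /c /=.
case: eqP => [e|ne] /=.
- by rewrite e => /esym; apply: rho_z.
- by move=> e; apply: ne.
Qed.
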